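(* For all positive integers $l,m,n$, the multigraph $K_{m,n}^l$ is an abelian $G$-graph.
   Context: $K_{m,n}^l$ is the loopless multigraph with vertex set partitioned into a part of $m$ vertices and a part of $n$ vertices, in which every vertex of the first part is joined to every vertex of the second part by exactly $l$ parallel edges, and there are no other edges. For a group $G$ and a multiset $S$ of elements of $G$, $\Phi(G,S)$ is the multigraph whose vertex set is the union over the members $s$ of $S$ (with multiplicity) of $V_s=\{\langle s\rangle x: x\in G\}$ (right cosets), with, for $\langle s\rangle x\in V_s$, $\langle t\rangle y\in V_t$, $s,t$ distinct members of $S$, one edge labeled $g$ between them for each $g\in\langle s\rangle x\cap\langle t\rangle y$, and no other edges. An abelian $G$-graph is a multigraph isomorphic (ignoring labels) to $\Phi(G,S)$ for some abelian group $G$ and multiset $S$. *)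

(* Defs.v *)
From mathcomp Require Import all_boot all_fingroup.
Set Implicit Arguments. Unset Strict Implicit. Unset Printing Implicit Defensive.
Import GroupScope.

(* A finite loopless multigraph is given by a finite vertex type V and an
   edge-multiplicity function mult : V -> V -> nat (mult u v = number of
   edges between u and v). *)

Definition mg_iso (V1 V2 : finType) (m1 : V1 -> V1 -> nat) (m2 : V2 -> V2 -> nat) :=
  exists f : V1 -> V2, bijective f /\ forall u v, m2 (f u) (f v) = m1 u v.

Definition Kmnl_mult (l m n : nat) (u v : 'I_m + 'I_n) : nat :=
  match u, v with
  | inl _, inr _ => l
  | inr _, inl _ => l
  | _, _ => 0
  end.

Arguments Kmnl_mult : clear implicits.

(* Phi(G,S), S a multiset of size k given as a k-tuple.  The vertex set is the
   disjoint union (indexed by positions in S, i.e. with multiplicity) of the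
   sets V_s of right cosets <s>x. *)
Definition Phi_vert (gT : finGroupType) (k : nat) (S : k.-tuple gT) :=
  {p : 'I_k * {set gT} | p.2 \in rcosets <[tnth S p.1]> [set: gT]}.

Definition Phi_mult (gT : finGroupType) (k : nat) (S : k.-tuple gT)
  (u v : Phi_vert S) : nat :=
  if (val u).1 != (val v).1 then #|(val u).2 :&: (val v).2| else 0.

Definition abelian_Ggraph (V : finType) (mult : V -> V -> nat) : Prop :=
  exists (gT : finGroupType) (k : nat) (S : k.-tuple gT),
    abelian [set: gT] /\ mg_iso mult (@Phi_mult gT k S).

(* Main.v *)
Require Import Defs.
From mathcomp Require Import all_boot all_algebra all_fingroup all_solvable.
From mathcomp Require Import zify.
Set Implicit Arguments. Unset Strict Implicit. Unset Printing Implicit Defensive.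
Import GroupScope.

Lemma coset_meet (gT : finGroupType) (A B : {group gT}) X Y :
  A * B = [set: gT] -> X \in rcosets A [set: gT] -> Y \in rcosets B [set: gT] ->
  #|X :&: Y| = #|A :&: B|.
Proof.
move=> AB /rcosetsP[x _ ->] /rcosetsP[y _ ->].
have: x * y^-1 \in A * B by rewrite AB inE.
case/mulsgP=> a b Aa Bb Exy.
set g := a^-1 * x.
have gA : g \in A :* x by rewrite mem_rcoset /g -mulgA mulgV mulg1 groupV.
have gB : g \in B :* y.
  rewrite mem_rcoset /g -mulgA Exy mulgA mulVg mul1g //.
rewrite -(rcoset_eqP gA) -(rcoset_eqP gB).
have -> : A :* g :&: B :* g = (A :&: B) :* g.
  by apply/setP=> z; rewrite !inE !mem_rcoset inE.
by rewrite card_rcoset.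
Qed.

Lemma index_T (gT : finGroupType) (A : {group gT}) m :
  #|[set: gT]| = (m * #|A|)%N -> 0 < #|A| -> #|rcosets A [set: gT]| = m.
Proof.
move=> H pos; have := LagrangeI [set: gT] A.
rewrite setTI H [(m * _)%N]mulnC => /eqP; rewrite eqn_pmul2l // => /eqP.
by [].
Qed.

Section Abs.
Variables (gT : finGroupType) (s t : gT) (l m n : nat).
Hypotheses (m0 : 0 < m) (n0 : 0 < n).
Hypothesis AB : <[s]> * <[t]> = [set: gT].
Hypothesis ABl : #|<[s]> :&: <[t]>| = l.
Hypothesis cs : #|[set: gT]| = (m * #[s])%N.
Hypothesis ct : #|[set: gT]| = (n * #[t])%N.

Let S : 2.-tuple gT := [tuple s; t].
Let i0 : 'I_2 := ord0.
Let i1 : 'I_2 := ord_max.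

Let cm : #|rcosets <[s]> [set: gT]| = m.
Proof. by apply: index_T; rewrite // cardG_gt0. Qed.
Let cn : #|rcosets <[t]> [set: gT]| = n.
Proof. by apply: index_T; rewrite // cardG_gt0. Qed.

Definition fv (u : 'I_m + 'I_n) : Phi_vert S :=
  match u with
  | inl i => exist _ (i0, enum_val (cast_ord (esym cm) i)) (enum_valP _)
  | inr j => exist _ (i1, enum_val (cast_ord (esym cn) j)) (enum_valP _)
  end.

Lemma fv_inj : injective fv.
Proof.
case=> [i|j] [i'|j'] //= [] // /enum_val_inj /cast_ord_inj -> //.
Qed.

Lemma fv_surj (v : Phi_vert S) : exists u, fv u = v.
Proof.
case: v => [[i X] HX].
have : (i == i0) || (i == i1).
  by case: i {HX} => [[|[|k]] Hk] //.
case/orP=> /eqP Ei; subst i.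
- exists (inl (cast_ord cm (enum_rank_in HX X))); apply: val_inj => /=.
  by rewrite cast_ordK enum_rankK_in.
- exists (inr (cast_ord cn (enum_rank_in HX X))); apply: val_inj => /=.
  by rewrite cast_ordK enum_rankK_in.
Qed.

Lemma fv_mult u v : Phi_mult (fv u) (fv v) = Kmnl_mult l m n u v.
Proof.
rewrite /Phi_mult; case: u => [i|j]; case: v => [i'|j'] //=.
- rewrite (coset_meet AB) //; exact: (enum_valP _).
- rewrite setIC (coset_meet AB) //; exact: (enum_valP _).
Qed.

Lemma abs_main : mg_iso (Kmnl_mult l m n) (@Phi_mult gT 2 S).
Proof.
exists fv; split; last by move=> u v; apply: fv_mult.
pose d : 'I_m + 'I_n := inl (Ordinal m0).
exists (fun v => odflt d [pick u | fv u == v]).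
- move=> u; case: pickP => [u' /eqP /fv_inj //| /(_ u)]; by rewrite eqxx.
- move=> v; case: pickP => [u' /eqP //|H]; case: (fv_surj v) => u Hu.
  by have := H u; rewrite Hu eqxx.
Qed.
End Abs.

Lemma ord_eq (gT : finGroupType) (x : gT) d :
  (forall k, (x ^+ k == 1) = (d %| k)%N) -> #[x] = d.
Proof.
move=> H; apply/eqP; rewrite eqn_dvd order_dvdn H dvdnn /= -H.
by rewrite expg_order.
Qed.

Section Conc.
Variables (l m n : nat).
Hypotheses (l0 : 0 < l) (m0 : 0 < m) (n0 : 0 < n).
Let p := (l * m * n).-1.
Let Np : p.+1 = (l * m * n)%N.
Proof. by rewrite /p prednK // !muln_gt0 l0 m0 n0. Qed.
Let Z := 'I_p.+1.
Let gT0 := (Z * Z)%type.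
Let e : Z := Zp1.

Lemma eX k : (e ^+ k == 1) = (l * m * n %| k)%N.
Proof. by rewrite -order_dvdn order_Zp1 Np. Qed.

Lemma pairX (x y : Z) k : ((x, y) : gT0) ^+ k = (x ^+ k, y ^+ k).
Proof. elim: k => [|k IH] //; by rewrite !expgS IH. Qed.

Let s : gT0 := (e ^+ m, 1).
Let t : gT0 := (e ^+ n, e ^+ (l * n)).

Lemma ord_s : #[s] = (l * n)%N.
Proof.
apply: ord_eq => k; rewrite pairX expg1n -expgM.
rewrite /eq_op /= -/(_ == _) eX andbT.
rewrite (_ : (l * m * n = m * (l * n))%N); last by lia.
by rewrite dvdn_pmul2l.
Qed.

Lemma ord_t : #[t] = (l * m)%N.
Proof.
apply: ord_eq => k; rewrite pairX -!expgM.
rewrite /eq_op /= -/(_ == _) -/(_ == _) !eX.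
rewrite (_ : (l * m * n = n * (l * m))%N); last by lia.
rewrite dvdn_pmul2l // (_ : (n * (l * m) = m * (l * n))%N); last by lia.
rewrite [(l * n * k)%N]mulnC dvdn_pmul2r ?muln_gt0 ?l0 //.
apply/idP/idP => [/andP[]//|H]; rewrite H /=; apply: dvdn_trans H; exact: dvdn_mull.
Qed.

Lemma tm_s : t ^+ m = s ^+ n.
Proof.
rewrite !pairX -!expgM expg1n; congr (_, _); first by rewrite mulnC.
by apply/eqP; rewrite eX; apply/dvdnP; exists 1%N; lia.
Qed.

Lemma ord_tm : #[t ^+ m] = l.
Proof.
apply: ord_eq => k; rewrite -expgM -order_dvdn ord_t.
by rewrite [(l * m)%N]mulnC dvdn_pmul2l.
Qed.

Lemma inter_st : <[s]> :&: <[t]> = <[t ^+ m]>.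
Proof.
apply/eqP; rewrite eqEsubset; apply/andP; split; last first.
  by rewrite subsetI !cycle_subG mem_cycle tm_s mem_cycle.
apply/subsetP=> z /setIP[/cycleP[a ->] /cycleP[b Eb]].
have H2 : (s ^+ a).2 = (t ^+ b).2 by rewrite Eb.
rewrite !pairX expg1n /= in H2; move: H2 => /esym/eqP; rewrite -expgM eX.
rewrite (_ : (l * m * n = m * (l * n))%N); last by lia.
rewrite [(l * n * b)%N]mulnC dvdn_pmul2r ?muln_gt0 ?l0 // => /dvdnP[c Ec].
by rewrite Eb Ec mulnC expgM mem_cycle.
Qed.

Lemma abT : abelian [set: gT0].
Proof.
apply/centsP=> [[x1 x2]] _ [y1 y2] _.
rewrite /commute /mulg /=; congr (_, _); apply: Zp_mulgC.
Qed.

Let K := (<[s]> <*> <[t]>)%G.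
Let HK : (K : {set gT0}) = <[s]> * <[t]>.
Proof. by apply: cent_joinEr; apply: sub_abelian_cent2 abT (subsetT _) (subsetT _). Qed.
Let sK : <[s]> \subset K. Proof. exact: joing_subl. Qed.
Let tK : <[t]> \subset K. Proof. exact: joing_subr. Qed.

Let cardK : #|K| = (l * m * n)%N.
Proof.
have E : (#[s] * #[t])%N = (#|(<[s]> * <[t]>)%g| * #|<[s]> :&: <[t]>|)%N := mul_cardG _ _.
have otm : #|<[t ^+ m]>| = l := ord_tm.
move: E; rewrite inter_st otm ord_s ord_t -HK.
rewrite (_ : (l * n * (l * m) = (l * m * n) * l)%N); last by lia.
by move/eqP; rewrite eqn_pmul2r // eq_sym => /eqP.
Qed.

Theorem conc : abelian_Ggraph (Kmnl_mult l m n).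
Proof.
pose s' := subg K s; pose t' := subg K t.
have sKs : s \in K by rewrite -cycle_subG.
have tKt : t \in K by rewrite -cycle_subG.
have cs : <[s']> = subg K @* <[s]> by rewrite morphim_cycle.
have ct : <[t']> = subg K @* <[t]> by rewrite morphim_cycle.
have os : #[s'] = (l * n)%N.
  rewrite -[#[s']]/#|<[s']>| cs card_injm //; last exact: injm_subg. by rewrite -ord_s.
have ot : #[t'] = (l * m)%N.
  rewrite -[#[t']]/#|<[t']>| ct card_injm //; last exact: injm_subg. by rewrite -ord_t.
have cT : #|[set: subg_of K]| = (l * m * n)%N.
  rewrite -im_subg card_injm //; exact: injm_subg.
have AB : <[s']> * <[t']> = [set: subg_of K].
  by rewrite cs ct -morphimMl // -HK im_subg.
have ABl : #|<[s']> :&: <[t']>| = l.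
  have E : (#[s'] * #[t'])%N = (#|(<[s']> * <[t']>)%g| * #|<[s']> :&: <[t']>|)%N := mul_cardG _ _.
  move: E; rewrite AB cT os ot.
  rewrite (_ : (l * n * (l * m) = (l * m * n) * l)%N); last by lia.
  by move/eqP; rewrite eqn_pmul2l ?muln_gt0 ?l0 ?m0 // eq_sym => /eqP.
exists (subg_of K); exists 2; exists [tuple s'; t']; split.
  by rewrite -im_subg; apply: morphim_abelian; apply: abelianS (subsetT _) abT.
apply: abs_main => //.
- by rewrite cT os; lia.
- by rewrite cT ot; lia.
Qed.
End Conc.

Theorem proposition6 (l m n : nat) :
  0 < l -> 0 < m -> 0 < n -> abelian_Ggraph (Kmnl_mult l m n).
Proof. move=> l0 m0 n0; exact: conc. Qed.
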